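(* Let $N$ be a positive odd integer and $\alpha,\beta$ real; put $\sigma=\alpha+\beta$. Define the rational functions $$E_1(x)=\frac{(x+\sigma+3)(x+\alpha-\beta+1)(x-\sigma-2N+1)}{4(x+1)(x+3)},\qquad E_2(x)=-\frac{(x-\sigma-1)(x+\beta-\alpha-3)(x+\sigma+2N+1)}{4(x-1)(x-3)},$$ $$G_1(x)=\frac{\sigma(\sigma+2+2N)(x+1+\alpha-\beta)}{(1-x^2)(x+3)},\qquad G_2(x)=\frac{(\alpha-\beta)(x-\sigma-1)(x+\sigma+2N+1)}{(1-x^2)(x-3)},$$ and the operator $$(Hf)(x)=E_1(x)\big(f(x+4)-f(x)\big)+E_2(x)\big(f(x-4)-f(x)\big)+G_1(x)\big(f(-x-2)-f(x)\big)+G_2(x)\big(f(-x+2)-f(x)\big).$$ Then for every $n\in\{0,1,\dots,N\}$ the monic dual $-1$ Hahn polynomial $P_n$ satisfies $(HP_n)(x)=2n\,P_n(x)$ for all $x\notin\{\pm1,\pm3\}$ (in particular $HP_n$ is a polynomial of degree $n$).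
   Context: For $N$ odd: $b_n^{(-1)}=-1-\alpha+\beta$ for $n$ even, $b_n^{(-1)}=-1+\alpha-\beta$ for $n$ odd; $u_n^{(-1)}=4n(N+1-n)$ for $n$ even, $u_n^{(-1)}=4(\alpha+n)(\beta+N+1-n)$ for $n$ odd. The monic dual $-1$ Hahn polynomials are defined by $P_{-1}=0$, $P_0=1$, $P_{n+1}(x)=(x-b_n^{(-1)})P_n(x)-u_n^{(-1)}P_{n-1}(x)$ for $n\ge0$. *)

(* Defs.v *)
From Stdlib Require Import Reals Lra Lia.
Open Scope R_scope.

(* Recurrence coefficients of the monic dual -1 Hahn polynomials, N odd. *)
Definition bcoef (a b : R) (n : nat) : R :=
  if Nat.even n then -1 - a + b else -1 + a - b.

Definition ucoef (N : nat) (a b : R) (n : nat) : R :=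
  if Nat.even n then 4 * INR n * (INR N + 1 - INR n)
  else 4 * (a + INR n) * (b + INR N + 1 - INR n).

(* Ppair N a b n x = (P_{n-1}(x), P_n(x)), with P_{-1} = 0, P_0 = 1,
   P_{n+1} = (x - b_n) P_n - u_n P_{n-1}. *)
Fixpoint Ppair (N : nat) (a b : R) (n : nat) (x : R) : R * R :=
  match n with
  | O => (0, 1)
  | S m => let (p, q) := Ppair N a b m x in
           (q, (x - bcoef a b m) * q - ucoef N a b m * p)
  end.

Definition dHahnP (N : nat) (a b : R) (n : nat) (x : R) : R :=
  snd (Ppair N a b n x).

Definition E1 (N : nat) (a b x : R) : R :=
  let s := a + b in
  (x + s + 3) * (x + a - b + 1) * (x - s - 2 * INR N + 1) / (4 * (x + 1) * (x + 3)).

Definition E2 (N : nat) (a b x : R) : R :=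
  let s := a + b in
  - ((x - s - 1) * (x + b - a - 3) * (x + s + 2 * INR N + 1) / (4 * (x - 1) * (x - 3))).

Definition G1 (N : nat) (a b x : R) : R :=
  let s := a + b in
  s * (s + 2 + 2 * INR N) * (x + 1 + a - b) / ((1 - x ^ 2) * (x + 3)).

Definition G2 (N : nat) (a b x : R) : R :=
  let s := a + b in
  (a - b) * (x - s - 1) * (x + s + 2 * INR N + 1) / ((1 - x ^ 2) * (x - 3)).

Definition Hop (N : nat) (a b : R) (f : R -> R) (x : R) : R :=
  E1 N a b x * (f (x + 4) - f x) + E2 N a b x * (f (x - 4) - f x)
  + G1 N a b x * (f (- x - 2) - f x) + G2 N a b x * (f (- x + 2) - f x).

(* Main.v *)
Require Import Defs.
From Stdlib Require Import Reals Lra Lia.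
Open Scope R_scope.

Definition Cop (N : nat) (a b : R) (f : R -> R) (x : R) : R :=
  4 * Defs.E1 N a b x * f (x + 4) - 4 * E2 N a b x * f (x - 4)
  + G1 N a b x * (-2 * x - 2) * f (- x - 2) + G2 N a b x * (2 - 2 * x) * f (- x + 2).
Definition C2op (N : nat) (a b : R) (f : R -> R) (x : R) : R :=
  16 * Defs.E1 N a b x * f (x + 4) + 16 * E2 N a b x * f (x - 4)
  + G1 N a b x * (-2 * x - 2) ^ 2 * f (- x - 2) + G2 N a b x * (2 - 2 * x) ^ 2 * f (- x + 2).

Lemma even_id N a b f x : x <> 1 -> x <> -1 -> x <> 3 -> x <> -3 ->
  (forall t, f (- t - 2) = f t) ->
  C2op N a b f x + 2 * (a - b) * Cop N a b f x + 16 * (a + 1) * (b + INR N) * f x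
  + 8 * (b - a - 2) * Hop N a b f x = 0.
Proof.
  intros h1 h2 h3 h4 Hs.
  unfold C2op, Cop, Hop, Defs.E1, E2, G1, G2.
  rewrite Hs. replace (- x + 2) with (- (x - 4) - 2) by ring. rewrite Hs.
  assert (x + 1 <> 0) by lra. assert (x + 3 <> 0) by lra.
  assert (x - 1 <> 0) by lra. assert (x - 3 <> 0) by lra.
  assert (1 - x ^ 2 <> 0).
  { replace (1 - x^2) with ((1 - x) * (1 + x)) by ring. apply Rmult_integral_contrapositive; split; lra. }
  field; repeat split; auto.
Qed.

Lemma odd_id N a b f g x : x <> 1 -> x <> -1 -> x <> 3 -> x <> -3 ->
  (forall t, g (- t - 2) = g t) -> (forall t, f t = (t + 1 + (a - b)) * g t) ->
  C2op N a b f x - 2 * (a - b) * Cop N a b f x + 16 * (INR N - a * (b + INR N + 1)) * f x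
  + 8 * (a - b - 2) * Hop N a b f x = 0.
Proof.
  intros h1 h2 h3 h4 Hs Hf.
  unfold C2op, Cop, Hop, Defs.E1, E2, G1, G2.
  rewrite !Hf.
  rewrite Hs. replace (- x + 2) with (- (x - 4) - 2) by ring. rewrite Hs.
  assert (x + 1 <> 0) by lra. assert (x + 3 <> 0) by lra.
  assert (x - 1 <> 0) by lra. assert (x - 3 <> 0) by lra.
  assert (1 - x ^ 2 <> 0).
  { replace (1 - x^2) with ((1 - x) * (1 + x)) by ring. apply Rmult_integral_contrapositive; split; lra. }
  field; repeat split; auto.
Qed.

Definition Mv N a b n t := fst (Ppair N a b n t).

Lemma Pstep N a b n t : dHahnP N a b (S n) t =
  (t - bcoef a b n) * dHahnP N a b n t - ucoef N a b n * Mv N a b n t.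
Proof. unfold dHahnP, Mv; simpl; destruct (Ppair N a b n t); reflexivity. Qed.

Lemma Mstep N a b n t : Mv N a b (S n) t = dHahnP N a b n t.
Proof. unfold dHahnP, Mv; simpl; destruct (Ppair N a b n t); reflexivity. Qed.

Lemma bE a b n : Nat.even n = true -> bcoef a b n = -1 - a + b.
Proof. unfold bcoef; intros ->; auto. Qed.
Lemma bO a b n : Nat.even n = false -> bcoef a b n = -1 + a - b.
Proof. unfold bcoef; intros ->; auto. Qed.
Lemma uE N a b n : Nat.even n = true -> ucoef N a b n = 4 * INR n * (INR N + 1 - INR n).
Proof. unfold ucoef; intros ->; auto. Qed.
Lemma uO N a b n : Nat.even n = false -> ucoef N a b n = 4 * (a + INR n) * (b + INR N + 1 - INR n).
Proof. unfold ucoef; intros ->; auto. Qed.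

Lemma evS n : Nat.even (S n) = negb (Nat.even n).
Proof. rewrite Nat.even_succ, <- Nat.negb_even; reflexivity. Qed.

Lemma parity N a b n :
  (Nat.even n = true -> (forall t, dHahnP N a b n (- t - 2) = dHahnP N a b n t) /\
     exists g, (forall t, g (- t - 2) = g t) /\ forall t, Mv N a b n t = (t + 1 + (a - b)) * g t) /\
  (Nat.even n = false -> (forall t, Mv N a b n (- t - 2) = Mv N a b n t) /\
     exists g, (forall t, g (- t - 2) = g t) /\ forall t, dHahnP N a b n t = (t + 1 + (a - b)) * g t).
Proof.
  induction n as [|n [IHe IHo]].
  - split; intros H.
    + split. { intros; reflexivity. }
      exists (fun _ => 0). split; intros; unfold Mv; simpl; ring.
    + discriminate.
  - rewrite evS. destruct (Nat.even n) eqn:E; simpl; split; intros H; try discriminate.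
    + destruct (IHe eq_refl) as [Hs [g [Hg Hm]]].
      split. { intros; rewrite !Mstep; auto. }
      exists (fun t => dHahnP N a b n t - ucoef N a b n * g t). split.
      * intros; rewrite Hs, Hg; auto.
      * intros; rewrite Pstep, Hm, bE by auto; ring.
    + destruct (IHo eq_refl) as [Hs [g [Hg Hp]]].
      split.
      * intros; rewrite !Pstep, !Hp, bO, Hg, Hs by auto; ring.
      * exists g. split; auto.
        intros; rewrite Mstep; auto.
Qed.

Lemma H_lin N a b h f g c k x : (forall t, h t = (t - c) * f t - k * g t) ->
  Hop N a b h x = (x - c) * Hop N a b f x + Cop N a b f x - k * Hop N a b g x.
Proof. intros Hh. unfold Hop, Cop. rewrite !Hh. ring. Qed.

Lemma C_lin N a b h f g c k x : (forall t, h t = (t - c) * f t - k * g t) ->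
  Cop N a b h x = (x - c) * Cop N a b f x + C2op N a b f x - k * Cop N a b g x.
Proof. intros Hh. unfold C2op, Cop. rewrite !Hh. ring. Qed.

Definition T N a b x n :=
  Hop N a b (dHahnP N a b n) x = 2 * INR n * dHahnP N a b n x /\
  Cop N a b (dHahnP N a b n) x = 2 * dHahnP N a b (S n) x - 2 * ucoef N a b n * Mv N a b n x.

Lemma C2_of N a b n x : x <> 1 -> x <> -1 -> x <> 3 -> x <> -3 ->
  C2op N a b (dHahnP N a b n) x =
  if Nat.even n then
   - 2 * (a - b) * Cop N a b (dHahnP N a b n) x - 16 * (a + 1) * (b + INR N) * dHahnP N a b n x
   - 8 * (b - a - 2) * Hop N a b (dHahnP N a b n) x
  else 2 * (a - b) * Cop N a b (dHahnP N a b n) x - 16 * (INR N - a * (b + INR N + 1)) * dHahnP N a b n x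
  - 8 * (a - b - 2) * Hop N a b (dHahnP N a b n) x.
Proof.
  intros h1 h2 h3 h4. destruct (parity N a b n) as [He Ho].
  destruct (Nat.even n) eqn:E.
  - destruct (He eq_refl) as [Hs _]. pose proof (even_id N a b _ x h1 h2 h3 h4 Hs). lra.
  - destruct (Ho eq_refl) as [_ [g [Hg Hp]]]. pose proof (odd_id N a b _ g x h1 h2 h3 h4 Hg Hp). lra.
Qed.

Lemma T_all N a b x n : x <> 1 -> x <> -1 -> x <> 3 -> x <> -3 -> T N a b x n /\ T N a b x (S n).
Proof.
  intros h1 h2 h3 h4.
  assert (nz : x + 1 <> 0 /\ x + 3 <> 0 /\ x - 1 <> 0 /\ x - 3 <> 0 /\ 1 - x ^ 2 <> 0).
  { repeat split; try lra.
    replace (1 - x^2) with ((1 - x) * (1 + x)) by ring. apply Rmult_integral_contrapositive; split; lra. }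
  destruct nz as (n1 & n2 & n3 & n4 & n5).
  induction n as [|n [[Ha0 Hc0] [Ha1 Hc1]]].
  - unfold T; split; split; unfold Hop, Cop, dHahnP, Mv, Defs.E1, E2, G1, G2, bcoef, ucoef; simpl; unfold bcoef, ucoef; simpl; assert (1 - x * (x * 1) <> 0) by (simpl in n5; exact n5); assert (1 - x * x <> 0) by (simpl in n5; rewrite Rmult_1_r in n5; exact n5); field; repeat split; auto.
  - split; [split; assumption|].
    assert (Hrec : forall t, dHahnP N a b (S (S n)) t =
      (t - bcoef a b (S n)) * dHahnP N a b (S n) t - ucoef N a b (S n) * dHahnP N a b n t).
    { intros; rewrite Pstep, Mstep; reflexivity. }
    assert (Hrec0 : forall t, dHahnP N a b (S n) t =
      (t - bcoef a b n) * dHahnP N a b n t - ucoef N a b n * Mv N a b n t).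
    { intros; apply Pstep. }
    split.
    + rewrite (H_lin _ _ _ _ _ _ _ _ x Hrec), Ha1, Hc1, Ha0, Mstep, Hrec.
      rewrite !S_INR. ring.
    + rewrite (C_lin _ _ _ _ _ _ _ _ x Hrec), Hc1, Hc0, C2_of, Ha1, Hc1 by auto.
      rewrite Mstep, (Pstep _ _ _ (S (S n))), Mstep, Hrec, Hrec0.
      rewrite !S_INR, !evS.
      destruct (Nat.even n) eqn:E; simpl negb; cbv iota.
      * rewrite (bE a b (S (S n))), (bO a b (S n)), (bE a b n), (uE N a b (S (S n))), (uO N a b (S n)), (uE N a b n)
          by (rewrite ?evS; simpl; rewrite ?E; auto).
        rewrite !S_INR. ring.
      * rewrite (bO a b (S (S n))), (bE a b (S n)), (bO a b n), (uO N a b (S (S n))), (uE N a b (S n)), (uO N a b n)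
          by (rewrite ?evS; simpl; rewrite ?E; auto).
        rewrite !S_INR. ring.
Qed.

Theorem mainTheorem8 (N : nat) (a b : R) (n : nat) (x : R) :
  Nat.odd N = true -> (n <= N)%nat ->
  x <> 1 -> x <> -1 -> x <> 3 -> x <> -3 ->
  Hop N a b (dHahnP N a b n) x = 2 * INR n * dHahnP N a b n x.
Proof.
  intros _ _ h1 h2 h3 h4.
  destruct (T_all N a b x n h1 h2 h3 h4) as [[H _] _]. exact H.
Qed.
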